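(* Let $\delta>0$. For any $m>64\pi^2$, $\kappa>0$ and $\mu^\star>0$ one can find $\varepsilon\in(0,1)$, $\ell>0$ and $\gamma>0$ such that: $\ell\ge\delta$; $$-2^5\xi^2+(\mu^\star\varepsilon+6\ell)\xi-(\gamma+1)\ell\le0\quad\text{for all }\xi\in\mathbb{R};$$ $2\gamma^2-3\ell\ge0$; $e^{\varepsilon}<\frac{1+2\kappa}{1+\kappa}$; $e^{(\gamma+1)\varepsilon}(1+3\varepsilon^3)<\frac{m}{64\pi^2}$; and $$g(t):=e^{(\ell-\delta)t}\big(1+(\varepsilon-\ell t)^3\big)\ge1+\varepsilon^3\quad\text{for all }t\in(0,\varepsilon/\ell).$$ *)

(* Defs.v *)
From Stdlib Require Import Reals Lra.
Open Scope R_scope.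

Definition gfun (delta eps l t : R) : R :=
  exp ((l - delta) * t) * (1 + (eps - l * t) ^ 3).

(* Main.v *)
Require Import Defs.
From Stdlib Require Import Reals Lra Psatz.
Open Scope R_scope.

Lemma exp_up (x : R) : 0 <= x -> x <= 1/2 -> exp x <= 1 + 2 * x.
Proof.
  intros h0 h1.
  assert (H1 : 1 + - x <= exp (- x)) by apply exp_ineq1_le.
  assert (H2 : exp x * exp (- x) = 1).
  { rewrite <- exp_plus. replace (x + - x) with 0 by ring. apply exp_0. }
  assert (H3 : 0 < exp x) by apply exp_pos.
  nra.
Qed.

Theorem lemma3p4 (delta : R) (hdelta : 0 < delta) :
  forall (m kappa mustar : R),
    64 * PI ^ 2 < m -> 0 < kappa -> 0 < mustar ->
    exists (eps l gamma : R),
      0 < eps /\ eps < 1 /\ 0 < l /\ 0 < gamma /\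
      delta <= l /\
      (forall xi : R,
          - 2 ^ 5 * xi ^ 2 + (mustar * eps + 6 * l) * xi - (gamma + 1) * l <= 0) /\
      2 * gamma ^ 2 - 3 * l >= 0 /\
      exp eps < (1 + 2 * kappa) / (1 + kappa) /\
      exp ((gamma + 1) * eps) * (1 + 3 * eps ^ 3) < m / (64 * PI ^ 2) /\
      (forall t : R, 0 < t -> t < eps / l ->
          gfun delta eps l t >= 1 + eps ^ 3).
Proof.
  intros m kappa mus hm hk hmu.
  set (ll := 2 * delta).
  set (gamma := ll + 1).
  set (c := gamma + 1).
  set (a := kappa / (1 + kappa)).
  set (M := m / (64 * PI ^ 2)).
  set (b := M - 1).
  assert (hpi : 0 < PI) by apply PI_RGT_0.
  assert (hP : 0 < 64 * PI ^ 2) by nra.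
  assert (hM : 1 < M).
  { unfold M. apply (Rmult_lt_reg_r (64 * PI ^ 2)); auto.
    unfold Rdiv. rewrite Rmult_assoc, Rinv_l by lra. lra. }
  assert (hb : 0 < b) by (unfold b; lra).
  assert (ha : 0 < a) by (unfold a; apply Rdiv_lt_0_compat; lra).
  assert (hl : 0 < ll) by (unfold ll; lra).
  assert (hc : 0 < c) by (unfold c, gamma; lra).
  assert (hkeq : (1 + 2 * kappa) / (1 + kappa) = 1 + a).
  { unfold a. field. lra. }
  set (e := Rmin (Rmin (1/3) (ll / mus)) (Rmin (Rmin (a/4) (b / (8 * c)))
                                            (Rmin (1 / (2 * c)) (b / 12)))).
  assert (e1 : e <= 1/3) by (unfold e; eapply Rle_trans; [apply Rmin_l|apply Rmin_l]).
  assert (e2 : e <= ll / mus) by (unfold e; eapply Rle_trans; [apply Rmin_l|apply Rmin_r]).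
  assert (e3 : e <= a / 4) by (unfold e; eapply Rle_trans; [apply Rmin_r|];
    eapply Rle_trans; [apply Rmin_l|apply Rmin_l]).
  assert (e4 : e <= b / (8 * c)) by (unfold e; eapply Rle_trans; [apply Rmin_r|];
    eapply Rle_trans; [apply Rmin_l|apply Rmin_r]).
  assert (e5 : e <= 1 / (2 * c)) by (unfold e; eapply Rle_trans; [apply Rmin_r|];
    eapply Rle_trans; [apply Rmin_r|apply Rmin_l]).
  assert (e6 : e <= b / 12) by (unfold e; eapply Rle_trans; [apply Rmin_r|];
    eapply Rle_trans; [apply Rmin_r|apply Rmin_r]).
  assert (ep : 0 < e).
  { unfold e. repeat apply Rmin_pos; try lra;
    apply Rdiv_lt_0_compat; lra. }
  assert (e2' : mus * e <= ll).
  { apply (Rmult_le_compat_l mus) in e2; [|lra].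
    unfold Rdiv in e2. replace (mus * (ll * / mus)) with ll in e2 by (field; lra). lra. }
  assert (e4' : c * e <= b / 8).
  { apply (Rmult_le_compat_l c) in e4; [|lra].
    replace (c * (b / (8 * c))) with (b / 8) in e4 by (field; lra). lra. }
  assert (e5' : c * e <= 1 / 2).
  { apply (Rmult_le_compat_l c) in e5; [|lra].
    replace (c * (1 / (2 * c))) with (1 / 2) in e5 by (field; lra). lra. }
  exists e, ll, gamma.
  split; [lra|]. split; [lra|]. split; [lra|]. split; [unfold gamma; lra|].
  split; [unfold ll; lra|].
  split.
  { intro xi. set (B := mus * e + 6 * ll).
    assert (hB0 : 0 <= B) by (unfold B; nra).
    assert (hB1 : B <= 7 * ll) by (unfold B; lra).
    assert (hsq : 0 <= (64 * xi - B) ^ 2) by (apply pow2_ge_0).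
    unfold gamma. nra. }
  split.
  { unfold gamma. nra. }
  split.
  { rewrite hkeq. assert (H := exp_up e). lra. }
  split.
  { fold c. assert (H := exp_up (c * e) ltac:(nra) e5').
    set (u := exp (c * e) - 1).
    assert (hu0 : 0 <= u).
    { unfold u. assert (1 + c * e <= exp (c * e)) by apply exp_ineq1_le. nra. }
    assert (hu1 : u <= b / 4) by (unfold u; lra).
    assert (hu2 : u <= 1) by (unfold u; lra).
    set (v := 3 * e ^ 3).
    assert (hv0 : 0 <= v) by (unfold v; nra).
    assert (hv1 : v <= 3 * e) by (unfold v; nra).
    replace (exp (c * e)) with (1 + u) by (unfold u; ring).
    replace M with (1 + b) by (unfold b; ring).
    nra. }
  intros t ht0 ht1.
  unfold gfun.
  assert (hlt : ll * t < e).
  { apply (Rmult_lt_compat_l ll) in ht1; [|lra].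
    replace (ll * (e / ll)) with e in ht1 by (field; lra). lra. }
  set (s := e - ll * t).
  assert (hs0 : 0 < s) by (unfold s; lra).
  assert (hs1 : s < e) by (unfold s; nra).
  assert (hx : 1 + (ll - delta) * t <= exp ((ll - delta) * t)) by apply exp_ineq1_le.
  assert (hld : ll - delta = delta) by (unfold ll; lra).
  rewrite hld in hx |- *.
  assert (hfac : e ^ 3 - s ^ 3 = (ll * t) * (e ^ 2 + e * s + s ^ 2)) by (unfold s; ring).
  assert (hq : e ^ 2 + e * s + s ^ 2 <= 3 * e ^ 2) by nra.
  assert (hq2 : (ll * t) * (e ^ 2 + e * s + s ^ 2) <= (ll * t) * (3 * e ^ 2)).
  { apply Rmult_le_compat_l; nra. }
  assert (he2 : 3 * e ^ 2 <= 1/3) by nra.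
  assert (hdt : e ^ 3 - s ^ 3 <= delta * t).
  { rewrite hfac. eapply Rle_trans; [exact hq2|]. unfold ll.
    assert (hdt0 : 0 <= delta * t) by nra.
    assert (H := Rmult_le_compat_l (2 * (delta * t)) _ _ ltac:(lra) he2). nra. }
  assert (hs3 : 0 <= s ^ 3) by nra.
  fold s. apply Rle_ge.
  assert (H := Rmult_le_compat_r (1 + s ^ 3) _ _ ltac:(lra) hx).
  assert (hdt0 : 0 <= delta * t * s ^ 3) by (apply Rmult_le_pos; nra).
  lra.
Qed.
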